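(* Let $k\ge2$ and let $G=(\{a,b\},\varphi,a)$ be a circular D0L-system with $\varphi$ $k$-uniform. Then the graph of overhangs $GO_G$ does not contain two distinct vertices $s_1,s_2$ with an edge from $s_1$ to $s_2$, an edge from $s_2$ to $s_1$, and a loop on $s_1$ or on $s_2$.
   Context: A D0L-system $G=(\mathcal{A},\varphi,w)$ has $L(G)=\{\varphi^n(w)\}$ and $S(L(G))$ the set of factors of its words. An interpretation of $u\in S(L(G))$ is $(p,v,s)$ with $v\in S(L(G))$, $\varphi(v)=pus$. With $v=v_1\cdots v_n$, $v'=v'_1\cdots v'_m$, $u=u_1\cdots u_\ell$, interpretations $(p,v,s),(p',v',s')$ are synchronized at position $j$ if $\varphi(v_1\cdots v_i)=pu_1\cdots u_j$ and $\varphi(v'_1\cdots v'_{i'})=p'u_1\cdots u_j$ for some $i,i'$; $u$ has a synchronizing point at $j$ if all its interpretations are pairwise synchronized at $j$. A PD0L-system injective on $S(L(G))$ is circular if there is $Z$ such that every $u\in S(L(G))$ with $|u|>Z$ has a synchronizing point. $\varphi$ is $k$-uniform if $|\varphi(a)|=|\varphi(b)|=k$. Let $X=\{\varphi(a),\varphi(b)\}$. An overhang is a triple $(u_1\cdots u_m,v_1\cdots v_n,|x|)$ with $u_i,v_j\in X$, $x$ nonempty, such that: (i) $x$ is a suffix of $u_1\cdots u_m$ but not of $u_2\cdots u_m$; (ii) $x$ is a prefix of $v_1\cdots v_n$ but not of $v_1\cdots v_{n-1}$; (iii) $x\ne u_1\cdots u_m$ or $x\ne v_1\cdots v_n$; (iv)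 $|v_1\cdots v_{n-1}|<|x(u_2\cdots u_m)^{-1}|$. Its left overhang is $u_1\cdots u_mx^{-1}$, right overhang $x^{-1}v_1\cdots v_n$. $GO_G$ has an edge from $s_1$ to $s_2$ labelled by each overhang with left overhang $s_1$ and right overhang $s_2$. *)

(* Defs.v *)
From HB Require Import structures.
From mathcomp Require Import all_boot.
Set Implicit Arguments. Unset Strict Implicit. Unset Printing Implicit Defensive.

Inductive ab := a | b.

Definition ab_eqb (x y : ab) : bool :=
  match x, y with a, a | b, b => true | _, _ => false end.
Lemma ab_eqP : Equality.axiom ab_eqb.
Proof. by case; case; constructor. Qed.
HB.instance Definition _ := hasDecEq.Build ab ab_eqP.

Definition word := seq ab.

Definition phiw (phi : ab -> word) (w : word) : word := flatten (map phi w).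

(* u is in S(L(G)) for G = ({a,b}, phi, a): u is a factor of some phi^n(a). *)
Definition factor (phi : ab -> word) (u : word) : Prop :=
  exists n, infix u (iter n (phiw phi) [:: a]).

Definition interp (phi : ab -> word) (u p v s : word) : Prop :=
  factor phi v /\ phiw phi v = p ++ u ++ s.

Definition synchronized (phi : ab -> word) (u : word) (j : nat)
  (p v p' v' : word) : Prop :=
  exists i i', phiw phi (take i v) = p ++ take j u /\
               phiw phi (take i' v') = p' ++ take j u.

Definition sync_point (phi : ab -> word) (u : word) (j : nat) : Prop :=
  j <= size u /\
  forall p v s p' v' s', interp phi u p v s -> interp phi u p' v' s' ->
    synchronized phi u j p v p' v'.

Definition circular (phi : ab -> word) : Prop :=
  (forall c, phi c <> [::]) /\
  (forall u v, factor phi u -> factor phi v -> phiw phi u = phiw phi v -> u = v) /\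
  exists Z, forall u, factor phi u -> Z < size u -> exists j, sync_point phi u j.

Definition k_uniform (phi : ab -> word) (k : nat) : Prop :=
  size (phi a) = k /\ size (phi b) = k.

Definition inX (phi : ab -> word) (w : word) : Prop := w = phi a \/ w = phi b.

(* The list U = [u_1; ...; u_m], V = [v_1; ...; v_n] and x give an overhang
   (u_1...u_m, v_1...v_n, |x|). *)
Definition overhang (phi : ab -> word) (U V : seq word) (x : word) : Prop :=
  (forall w, w \in U -> inX phi w) /\
  (forall w, w \in V -> inX phi w) /\
  x <> [::] /\
  suffix x (flatten U) /\ ~~ suffix x (flatten (behead U)) /\
  prefix x (flatten V) /\ ~~ prefix x (flatten (take (size V).-1 V)) /\
  (x <> flatten U \/ x <> flatten V) /\
  size (flatten (take (size V).-1 V)) < size x - size (flatten (behead U)).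

Definition left_overhang (U : seq word) (x : word) : word :=
  take (size (flatten U) - size x) (flatten U).
Definition right_overhang (V : seq word) (x : word) : word :=
  drop (size x) (flatten V).

Definition GO_edge (phi : ab -> word) (s1 s2 : word) : Prop :=
  exists U V x, overhang phi U V x /\
    left_overhang U x = s1 /\ right_overhang V x = s2.

(* Main.v *)
Require Import Defs.
From mathcomp Require Import all_boot.
From mathcomp Require Import zify.

Definition pw (n : nat) (w : word) : word := iter n (cat w) [::].

Lemma comm_pow n (w z : word) : w ++ z = z ++ w -> pw n w ++ z = z ++ pw n w.
Proof.
move=> H; elim: n => [|n IH] /=; first by rewrite cats0.
by rewrite -catA IH catA H catA.
Qed.

Lemma comm_pow2 n m (w z : word) : w ++ z = z ++ w ->
  pw n w ++ pw m z = pw m z ++ pw n w.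
Proof.
move=> H; have H1 := comm_pow n _ _ H.
elim: m => [|m IH] /=; first by rewrite cats0.
by rewrite catA H1 -catA IH catA.
Qed.

Lemma size_pw n w : size (pw n w) = n * size w.
Proof. by elim: n => [|n IH] //=; rewrite size_cat IH mulSn. Qed.

Lemma cat_eq_l (s1 t1 s2 t2 : word) : s1 ++ t1 = s2 ++ t2 -> size s1 = size s2 ->
  s1 = s2 /\ t1 = t2.
Proof.
move=> H Hs; split.
  by have := congr1 (take (size s1)) H; rewrite take_size_cat // Hs take_size_cat.
by have := congr1 (drop (size s1)) H; rewrite drop_size_cat // Hs drop_size_cat.
Qed.

Lemma cat_eq_r (s1 t1 s2 t2 : word) : s1 ++ t1 = s2 ++ t2 -> size t1 = size t2 ->
  s1 = s2 /\ t1 = t2.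
Proof.
move=> H Ht; apply: cat_eq_l => //.
have := congr1 size H; rewrite !size_cat; lia.
Qed.

Lemma lemC (w w' z : word) : w ++ z = z ++ w -> w' ++ z = z ++ w' ->
  size w = size w' -> z <> [::] -> w = w'.
Proof.
move=> H H' Hs Hz.
have E1 : pw (size z) w = pw (size w) z.
  have := comm_pow2 (size z) (size w) _ _ H.
  move=> E; case: (cat_eq_l _ _ _ _ E) => //; rewrite !size_pw; lia.
have E2 : pw (size z) w' = pw (size w') z.
  have := comm_pow2 (size z) (size w') _ _ H'.
  move=> E; case: (cat_eq_l _ _ _ _ E) => //; rewrite !size_pw; lia.
have E3 : pw (size z) w = pw (size z) w' by rewrite E1 E2 Hs.
case: z Hz {H H' E1 E2} E3 => [//|c z] _ /= E3.
by case: (cat_eq_l _ _ _ _ E3 Hs).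
Qed.

Lemma edge_shape phi k s1 s2 : 1 <= k -> k_uniform phi k -> GO_edge phi s1 s2 ->
  exists x, x <> [::] /\ inX phi (s1 ++ x) /\ inX phi (x ++ s2).
Proof.
move=> Hk [Ha Hb] [U [V [x [[HU [HV [Hx [Hsu [_ [Hpv [_ [_ Hiv]]]]]]]] [<- <-]]]]].
have sizeX : forall W : seq word, (forall w, w \in W -> inX phi w) ->
    size (flatten W) = k * size W.
  elim=> [|w W IH] HW //=; first by rewrite muln0.
  rewrite size_cat IH; last by move=> w' Hw'; apply: HW; rewrite inE Hw' orbT.
  have [->|->] := HW w (mem_head _ _); rewrite ?Ha ?Hb mulnS //.
have sU := sizeX U HU; have sV := sizeX V HV.
have sbU : size (flatten (behead U)) = k * (size U).-1.
  rewrite sizeX; first by rewrite size_behead.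
  by move=> w Hw; apply: HU; apply: mem_behead.
have stV : size (flatten (take (size V).-1 V)) = k * (size V).-1.
  rewrite sizeX; first by rewrite size_take; case: (size V) => //= n; rewrite leqnn.
  by move=> w Hw; apply: HV; apply: mem_take Hw.
have lx1 : size x <= size (flatten U) by move/suffixP: Hsu => [t ->]; rewrite size_cat leq_addl.
have lx2 : size x <= size (flatten V) by move/prefixP: Hpv => [t ->]; rewrite size_cat leq_addr.
have x0 : 0 < size x by case: x Hx {Hsu Hpv lx1 lx2 Hiv} => //.
rewrite sbU stV in Hiv; rewrite sU in lx1; rewrite sV in lx2.
have U1 : size U = 1.
  case: (size U) lx1 Hiv => [|m]; first by rewrite muln0; lia.
  case: (size V) lx2 => [|n]; first by rewrite muln0; lia.
  move=> l2 l1 Hi /=; case: m l1 Hi => // m; rewrite !mulnS /=; nia.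
have V1 : size V = 1.
  case: (size V) lx2 Hiv => [|n]; first by rewrite muln0; lia.
  case: (size U) U1 lx1 => // m [->] l1 l2 /=; case: n l2 => // n; rewrite !mulnS; nia.
case: U HU Hsu U1 {sU sbU lx1 sizeX Hiv} => [|u [|//]] // HU Hsu _.
case: V HV Hpv V1 {sV stV lx2} => [|v [|//]] // HV Hpv _.
move: Hsu Hpv; rewrite /= !cats0 => /suffixP [t Ht] /prefixP [t' Ht'].
exists x; split => //; split.
  have := HU u (mem_head _ _); rewrite /left_overhang /= cats0 Ht size_cat addnK take_size_cat //.
by have := HV v (mem_head _ _); rewrite /right_overhang /= cats0 Ht' drop_size_cat.
Qed.

Lemma two_el phi w1 w2 w3 : inX phi w1 -> inX phi w2 -> inX phi w3 -> w1 <> w2 ->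
  w3 = w1 \/ w3 = w2.
Proof. by rewrite /inX; do 3 case=> ->; auto. Qed.

Lemma key phi k s1 s2 : 1 <= k -> k_uniform phi k -> s1 <> s2 ->
  GO_edge phi s1 s2 -> GO_edge phi s2 s1 -> GO_edge phi s1 s1 -> False.
Proof.
move=> Hk Hu Hne E12 E21 E11.
have [Ha Hb] := Hu.
have szX : forall w, inX phi w -> size w = k by move=> w [->|->].
have [x [Hx [A B]]] := @edge_shape _ k _ _ Hk Hu E12.
have [y [Hy [C D]]] := @edge_shape _ k _ _ Hk Hu E21.
have [z [Hz [E F]]] := @edge_shape _ k _ _ Hk Hu E11.
have sA := szX _ A; have sB := szX _ B; have sC := szX _ C; have sD := szX _ D.
have sE := szX _ E; have sF := szX _ F.
rewrite !size_cat in sA sB sC sD sE sF.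
have AC : s1 ++ x <> s2 ++ y by move=> H; case: (cat_eq_l _ _ _ _ H) => //; lia.
have [EA|EC] := @two_el _ _ _ _ A C E AC; last first.
  by case: (cat_eq_l _ _ _ _ EC) => //; lia.
case: (cat_eq_l _ _ _ _ EA) => // _ ?; subst z.
have [BA|BC] := @two_el _ _ _ _ A C B AC; have [FA|FC] := @two_el _ _ _ _ A C F AC;
  have [DA|DC] := @two_el _ _ _ _ A C D AC.
- by apply: Hne; case: (cat_eq_l _ _ _ _ (etrans FA (esym BA))).
- by apply: Hne; case: (cat_eq_l _ _ _ _ (etrans FA (esym BA))).
- by apply: Hne; case: (cat_eq_r _ _ _ _ (etrans DA (esym BA))) => //; lia.
-
  have xy : y = x by case: (cat_eq_r _ _ _ _ (etrans DC (esym FC))) => //; lia.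
  subst y.
  have H1 : (x ++ s2) ++ (x ++ x) = (x ++ x) ++ (x ++ s2).
    rewrite -!catA; congr (x ++ _); by rewrite catA -FC -catA -BA.
  have H2 : (s2 ++ x) ++ (x ++ x) = (x ++ x) ++ (s2 ++ x).
    rewrite -FC -!catA; congr (x ++ _); by rewrite catA -BA -catA -FC.
  have xx0 : x ++ x <> [::] by move=> H0; apply: Hx; move: H0; case: (x).
  have W := lemC _ _ _ H1 H2 (ltac:(rewrite !size_cat addnC //)) xx0.
  apply: Hne; case: (cat_eq_r _ _ _ _ (etrans (esym BA) W)) => //.
-
  have xy : y = x by case: (cat_eq_r _ _ _ _ (etrans DA (esym FA))) => //; lia.
  subst y.
  apply: Hne; apply: (lemC _ _ _ (esym FA) (esym BC)) => //; lia.
- by apply: Hne; case: (cat_eq_r _ _ _ _ (etrans DC (esym BC))) => //; lia.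
- by apply: Hne; case: (cat_eq_l _ _ _ _ (etrans FC (esym BC))).
- by apply: Hne; case: (cat_eq_l _ _ _ _ (etrans FC (esym BC))).
Qed.

Theorem mainTheorem7 (phi : ab -> word) (k : nat) :
  2 <= k -> k_uniform phi k -> circular phi ->
  ~ exists s1 s2 : word, s1 <> s2 /\
      GO_edge phi s1 s2 /\ GO_edge phi s2 s1 /\
      (GO_edge phi s1 s1 \/ GO_edge phi s2 s2).
Proof.
move=> Hk Hu _ [s1 [s2 [Hne [E12 [E21 [L|L]]]]]].
  by apply: (@key _ k _ _ (ltnW Hk) Hu Hne E12 E21 L).
by apply: (@key _ k _ _ (ltnW Hk) Hu (fun e => Hne (esym e)) E21 E12 L).
Qed.
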